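(* Under the setting of the context, assume $P(z)$ is primitive, $\mathbf{x}_0\neq 0$, and $h_0(z)\neq 0$. Then there exist $w_{j,l-1}\in\mathbb{F}_2$ ($0\le j\le k(v)$, $1\le l\le v$), not all zero, with $\sum_{l=1}^{v}\sum_{j=0}^{k(v)} w_{j,l-1}y_{i+j,l-1}=0$ for all $i\ge0$; and for every integer $k$ with $0\le k<k(v)$, the only coefficients $w_{j,l-1}\in\mathbb{F}_2$ ($0\le j\le k$, $1\le l\le v$) satisfying $\sum_{l=1}^{v}\sum_{j=0}^{k} w_{j,l-1}y_{i+j,l-1}=0$ for all $i\ge 0$ are all zero.
   Context: An $\mathbb{F}_2$-linear generator: a $p\times p$ matrix $\mathbf{A}$ and $w\times p$ matrix $\mathbf{B}$ over $\mathbb{F}_2$, states $\mathbf{x}_i=\mathbf{A}\mathbf{x}_{i-1}$, outputs $\mathbf{y}_i=\mathbf{B}\mathbf{x}_i={}^t(y_{i,0},\dots,y_{i,w-1})$, and $u_i=\sum_{l=1}^w y_{i,l-1}2^{-l}\in[0,1)$; $P(z)=\det(\mathbf{I}z-\mathbf{A})$. Fix $1\le v\le w$. For $k\ge1$, let $\Psi_k$ be the multiset $\{(u_0,\dots,u_{k-1}) : \mathbf{x}_0\in\mathbb{F}_2^p\}$. Dividing $[0,1)$ into $2^v$ equal intervals partitions $[0,1)^k$ into $2^{kv}$ equal cubic cells; the generator is $k$-dimensionally equidistributed with $v$-bit accuracy if each cell contains exactly $2^{p-kv}$ points of $\Psi_k$, and $k(v)$ is the largest such $k$. Also $G_{l-1}(z):=\sum_{i\ge0}y_{i,l-1}z^{-i-1}=h_{l-1}(z)/P(z)$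 with $h_{l-1}\in\mathbb{F}_2[z]$ for the given nonzero $\mathbf{x}_0$. *)

(* Defs.v *)
From HB Require Import structures.
From mathcomp Require Import all_boot all_order all_algebra.
Set Implicit Arguments. Unset Strict Implicit. Unset Printing Implicit Defensive.
Import Order.TTheory GRing.Theory Num.Theory.
Local Open Scope ring_scope.

Definition ybit (p w : nat) (A : 'M['F_2]_p) (B : 'M['F_2]_(w, p))
  (x0 : 'cV['F_2]_p) (i : nat) (l : 'I_w) : 'F_2 :=
  (B *m (A ^+ i *m x0)) l 0.

(* output bit y_{i,l} with a nat index l (0 if l >= w) *)
Definition y (p w : nat) (A : 'M['F_2]_p) (B : 'M['F_2]_(w, p))
  (x0 : 'cV['F_2]_p) (i l : nat) : 'F_2 :=
  if insub l is Some l' then ybit A B x0 i l' else 0.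

Definition u (p w : nat) (A : 'M['F_2]_p) (B : 'M['F_2]_(w, p))
  (x0 : 'cV['F_2]_p) (i : nat) : rat :=
  \sum_(l < w) (((ybit A B x0 i l != 0) : nat)%:R / 2%:R ^+ l.+1).

(* k-dimensional equidistribution with v-bit accuracy: every cubic cell
   prod_i [a_i/2^v, (a_i+1)/2^v) contains exactly 2^(p-kv) points of the
   multiset Psi_k (counting over all x0 in F_2^p); written multiplicatively
   as  count * 2^(kv) = 2^p  to avoid negative exponents. *)
Definition equidist (p w : nat) (A : 'M['F_2]_p) (B : 'M['F_2]_(w, p))
  (v k : nat) : Prop :=
  forall a : 'I_k -> 'I_(2 ^ v),
    (#|[set x0 : 'cV['F_2]_p | [forall i : 'I_k,
         (((a i)%:R / 2%:R ^+ v <= u A B x0 i)%R) &&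
         ((u A B x0 i < (a i).+1%:R / 2%:R ^+ v)%R)]]| * 2 ^ (k * v)
     = 2 ^ p)%N.

Definition is_kv (p w : nat) (A : 'M['F_2]_p) (B : 'M['F_2]_(w, p))
  (v kv : nat) : Prop :=
  equidist A B v kv /\ forall k, equidist A B v k -> (k <= kv)%N.

Definition primitive_poly (P : {poly 'F_2}) : Prop :=
  let d := (size P).-1 in
  [/\ irreducible_poly P,
      P %| 'X^(2 ^ d - 1) - 1
    & forall n, (0 < n < 2 ^ d - 1)%N -> ~~ (P %| 'X^n - 1)].

(* h_l(z) := P(z) G_l(z) where G_l(z) = sum_{i>=0} y_{i,l} z^{-i-1};
   its polynomial part is sum_{t<p} z^t sum_{t<m<=p} P_m y_{m-t-1,l}
   (the part with negative exponents vanishes by Cayley-Hamilton). *)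
Definition hpoly (p w : nat) (A : 'M['F_2]_p) (B : 'M['F_2]_(w, p))
  (x0 : 'cV['F_2]_p) (l : nat) : {poly 'F_2} :=
  \poly_(t < p) \sum_(m < p.+1 | (t < m)%N)
      ((char_poly A)`_m * y A B x0 (m - t - 1) l).

(* Main.v *)
Require Import Defs.
From HB Require Import structures.
From mathcomp Require Import all_boot all_order all_algebra.
From mathcomp Require Import ring lra zify.
Set Implicit Arguments. Unset Strict Implicit. Unset Printing Implicit Defensive.
Import Order.TTheory GRing.Theory Num.Theory.
Local Open Scope ring_scope.

Definition codeB (v : nat) (d : 'I_v -> bool) : nat :=
  (\sum_(l < v) d l * 2 ^ (v - l.+1))%N.

Lemma codeB_S v (d : 'I_v.+1 -> bool) :
  codeB d = (d ord0 * 2 ^ v + codeB (fun l => d (lift ord0 l)))%N.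
Proof.
rewrite /codeB big_ord_recl subn1 /=; congr (_ + _)%N.
Qed.

Lemma codeB_lt v (d : 'I_v -> bool) : (codeB d < 2 ^ v)%N.
Proof.
elim: v d => [|v IH] d; first by rewrite /codeB big_ord0.
rewrite codeB_S expnS; have := IH (fun l => d (lift ord0 l)).
by case: (d ord0) => /=; lia.
Qed.

Lemma codeB_inj v (d d' : 'I_v -> bool) : codeB d = codeB d' -> d =1 d'.
Proof.
elim: v d d' => [|v IH] d d' E; first by case.
move: E; rewrite !codeB_S.
have := codeB_lt (fun l => d (lift ord0 l)).
have := codeB_lt (fun l => d' (lift ord0 l)).
move=> h1 h2 E.
have e0 : d ord0 = d' ord0.
  by move: E h1 h2; case: (d ord0); case: (d' ord0) => //=; lia.
rewrite e0 in E; have E' := addnI E.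
move=> i; case: (unliftP ord0 i) => [j ->|->] //.
exact: (IH _ _ E').
Qed.

Lemma geom (m n : nat) :
  \sum_(m <= l < m + n) (2%:R ^+ l.+1 : rat)^-1 = (2%:R ^+ m)^-1 - (2%:R ^+ (m + n))^-1.
Proof.
elim: n => [|n IH]; first by rewrite addn0 big_geq // subrr.
rewrite addnS big_nat_recr ?leq_addr //= IH exprS.
have : (2%:R ^+ (m + n) : rat) != 0 by rewrite expf_neq0.
move=> h; field; by rewrite h expf_neq0.
Qed.

Lemma yE (p w : nat) (A : 'M['F_2]_p) (B : 'M['F_2]_(w, p)) x i (l : 'I_w) :
  ybit A B x i l = y A B x i l.
Proof.
rewrite /y; case: insubP => [l' _ e|]; last by rewrite ltn_ord.
by congr ybit; apply: val_inj.
Qed.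

Lemma u_split (p w v : nat) (A : 'M['F_2]_p) (B : 'M['F_2]_(w, p)) x i :
  (v <= w)%N ->
  exists T : rat, [/\ 0 <= T, T < 1 &
    u A B x i * 2%:R ^+ v = (codeB (fun l : 'I_v => y A B x i l != 0))%:R + T].
Proof.
move=> vw.
pose G l : rat := ((y A B x i l != 0) : nat)%:R / 2%:R ^+ l.+1.
have uE : u A B x i = \sum_(0 <= l < w) G l.
  by rewrite big_mkord; apply: eq_bigr => l _; rewrite yE.
have G0 l : 0 <= G l by rewrite divr_ge0 // exprn_ge0.
have G1 l : G l <= (2%:R ^+ l.+1)^-1.
  rewrite /G ler_pdivrMr ?exprn_gt0 // mulVf ?expf_neq0 //.
  by case: (_ != 0).
exists ((\sum_(v <= l < w) G l) * 2%:R ^+ v); split.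
- by rewrite mulr_ge0 ?exprn_ge0 // sumr_ge0.
- have S1 : \sum_(v <= l < w) G l <= (2%:R ^+ v)^-1 - (2%:R ^+ w)^-1.
    rewrite -{2}(subnKC vw) -geom subnKC //.
    by apply: ler_sum => l _.
  have a0 : (0 : rat) < 2%:R ^+ v by rewrite exprn_gt0.
  have b0 : (0 : rat) < 2%:R ^+ w by rewrite exprn_gt0.
  apply: (le_lt_trans (ler_wpM2r (ltW a0) S1)).
  rewrite mulrBl mulVf ?gt_eqF //.
  have : (0:rat) < (2%:R ^+ w)^-1 * 2%:R ^+ v by apply: mulr_gt0; rewrite ?invr_gt0.
  lra.
rewrite uE (big_cat_nat (leq0n v) vw) /= mulrDl; congr (_ + _).
rewrite big_mkord mulr_suml /codeB natr_sum; apply: eq_bigr => l _.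
have e : (2%:R ^+ v : rat) = 2%:R ^+ (v - l.+1) * 2%:R ^+ l.+1.
  by rewrite -exprD subnK.
rewrite natrM natrX /G e; field.
by rewrite expf_neq0.
Qed.

Lemma cell (p w v : nat) (A : 'M['F_2]_p) (B : 'M['F_2]_(w, p)) x i (a : nat) :
  (v <= w)%N ->
  (((a%:R / 2%:R ^+ v <= u A B x i)%R) && ((u A B x i < a.+1%:R / 2%:R ^+ v)%R))
  = (codeB (fun l : 'I_v => y A B x i l != 0) == a).
Proof.
move=> vw; have [T [T0 T1 E]] := u_split A B x i vw.
have a0 : (0 : rat) < 2%:R ^+ v by rewrite exprn_gt0.
rewrite ler_pdivrMr // ltr_pdivlMr // E.
set c := codeB _.
apply/andP/eqP => [[h1 h2]|->]; last by split; lra.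
have h3 : (c%:R : rat) < a.+1%:R by lra.
have h4 : (a%:R : rat) < c.+1%:R by rewrite -addn1 natrD; lra.
rewrite ltr_nat in h3; rewrite ltr_nat in h4.
by apply/eqP; rewrite eqn_leq -ltnS h3 -ltnS h4.
Qed.
Lemma cyc_poly (n : nat) (A : 'M['F_2]_n.+1) (x0 : 'cV_n.+1) (q : {poly 'F_2}) :
  irreducible_poly (char_poly A) -> x0 != 0 ->
  (size q <= n.+1)%N -> horner_mx A q *m x0 = 0 -> q = 0.
Proof.
move=> irr nx sq hq; apply/eqP; apply/negPn/negP => nq.
have cop : coprimep (char_poly A) q.
  rewrite irreducible_poly_coprime //; apply/negP => dv.
  have := dvdp_leq nq dv; rewrite size_char_poly; move=> h.
  by have := leq_trans h sq; rewrite ltnn.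
have [[u1 u2] /= E] := Bezout_eq1_coprimepP _ _ cop.
have : horner_mx A (u1 * char_poly A + u2 * q) = 1 by rewrite E rmorph1.
rewrite rmorphD !rmorphM /= => E1.
rewrite Cayley_Hamilton mulr0 add0r in E1.
move/negP: nx; apply; apply/eqP.
transitivity ((horner_mx A u2 * horner_mx A q) *m x0).
  by rewrite E1 mul1mx.
by rewrite -mulmxE -mulmxA hq mulmx0.
Qed.

Lemma cyc (n : nat) (A : 'M['F_2]_n.+1) (x0 : 'cV_n.+1) (r : 'rV_n.+1) :
  irreducible_poly (char_poly A) -> x0 != 0 ->
  (forall i, r *m (A ^+ i *m x0) = 0) -> r = 0.
Proof.
move=> irr nx hr.
pose f (c : 'cV['F_2]_n.+1) := \sum_(i < n.+1) c i 0 *: (A ^+ i *m x0).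
have finj : injective f.
  move=> c c' E.
  pose q := \poly_(i < n.+1) (c (inord i) 0 - c' (inord i) 0).
  have hq : horner_mx A q *m x0 = 0.
    rewrite /q poly_def rmorph_sum /= mulmx_suml.
    transitivity (f c - f c'); last by rewrite E subrr.
    rewrite /f -sumrB; apply: eq_bigr => i _.
    rewrite linearZ /= rmorphXn /= horner_mx_X -scalemxAl inord_val scalerBl.
    by [].
  have q0 := cyc_poly irr nx (size_poly _ _) hq.
  apply/matrixP => i j; rewrite (ord1 j); apply/eqP; rewrite -subr_eq0.
  have := congr1 (fun p : {poly _} => p`_i) q0.
  by rewrite /q coef_poly ltn_ord inord_val coef0 => ->.
have fsurj : forall y, exists c, y = f c.
  move=> y; have : y \in codom f by apply: inj_card_onto.
  by case/codomP=> c ->; exists c.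
apply/rowP => j; rewrite mxE.
have [c Ec] := fsurj (delta_mx j (ord0 : 'I_1)).
have : r *m delta_mx j (ord0 : 'I_1) = 0.
  by rewrite Ec /f mulmx_sumr big1 // => i _; rewrite -scalemxAr hr scaler0.
move/matrixP/(_ 0 0); rewrite !mxE => <-.
rewrite (bigD1 j) //= big1 ?addr0; first by rewrite !mxE !eqxx mulr1.
by move=> k nk; rewrite mxE (negbTE nk) mulr0.
Qed.

Lemma dichot (p : nat) (I : finType) (R : I -> 'rV['F_2]_p) :
  (exists W : I -> 'F_2, (exists i, W i != 0) /\ \sum_i W i *: R i = 0)
  \/ (forall t : I -> 'F_2, exists x : 'cV_p, forall i, (R i *m x) 0 0 = t i).
Proof.
pose M := \matrix_(n < #|I|) R (enum_val n).
have rowM n : row n M = R (enum_val n) by rewrite rowK.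
case: (boolP (row_free M)) => rf.
  right => t.
  have : row_full M^T by rewrite /row_full mxrank_tr.
  case/row_fullP => B EB.
  have EB' : M *m B^T = 1%:M by rewrite -[M]trmxK -trmx_mul EB trmx1.
  exists (B^T *m \col_n t (enum_val n)) => i.
  rewrite -[i]enum_rankK -rowM -row_mul mxE mulmxA EB' mul1mx mxE.
  by rewrite enum_rankK.
left.
have nk : kermx M != 0 by rewrite kermx_eq0.
have [n [m nz]] : exists n m, kermx M n m != 0.
  case: (pickP (fun nm : 'I_#|I| * 'I_#|I| => kermx M nm.1 nm.2 != 0)) => [[n m] /= h|h].
    by exists n, m.
  case/negP: nk; apply/eqP/matrixP => a b.
  by move: (h (a, b)) => /= /negbFE/eqP ->; rewrite mxE.
pose w := row n (kermx M).
exists (fun i => w 0 (enum_rank i)); split.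
  by exists (enum_val m); rewrite enum_valK mxE.
have -> : \sum_i w 0 (enum_rank i) *: R i = w *m M.
  rewrite mulmx_sum_row (reindex _ (onW_bij _ (enum_val_bij I))) /=.
  by apply: eq_bigr => k _; rewrite enum_valK rowM.
by rewrite /w -row_mul mulmx_ker row0.
Qed.

Lemma F2E (a : 'F_2) : a = ((a != 0) : nat)%:R.
Proof. by case: a => -[|[|m]] hm; try by apply/eqP. Qed.

Lemma codeB_ext v (d d' : 'I_v -> bool) : d =1 d' -> codeB d = codeB d'.
Proof. by move=> h; rewrite /codeB; apply: eq_bigr => l _; rewrite h. Qed.

Section Lin.
Variables (p w v : nat) (A : 'M['F_2]_p) (B : 'M['F_2]_(w, p)) (vw : (v <= w)%N).

Lemma yrow x i (l : 'I_v) :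
  y A B x i l = (row (widen_ord vw l) B *m A ^+ i *m x) 0 0.
Proof.
have := yE A B x i (widen_ord vw l); rewrite /= => <-.
by rewrite /ybit -mulmxA -row_mul [RHS]mxE.
Qed.

Lemma yadd x x' i (l : 'I_v) : y A B (x + x') i l = y A B x i l + y A B x' i l.
Proof. by rewrite !yrow mulmxDr mxE. Qed.

Lemma yopp x i (l : 'I_v) : y A B (- x) i l = - y A B x i l.
Proof. by rewrite !yrow mulmxN mxE. Qed.

Definition rvec k (W : 'I_k.+1 -> 'I_v -> 'F_2) : 'rV_p :=
  \sum_(l < v) \sum_(j < k.+1) W j l *: (row (widen_ord vw l) B *m A ^+ j).

Lemma relE k (W : 'I_k.+1 -> 'I_v -> 'F_2) x i :
  \sum_(l < v) \sum_(j < k.+1) W j l * y A B x (i + j) l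
  = (rvec W *m (A ^+ i *m x)) 0 0.
Proof.
rewrite /rvec mulmx_suml summxE; apply: eq_bigr => l _.
rewrite mulmx_suml summxE; apply: eq_bigr => j _.
by rewrite -scalemxAl mxE yrow addnC exprD -mulmxE !mulmxA.
Qed.

End Lin.

Lemma surj_of_equi (p w v : nat) (A : 'M['F_2]_p) (B : 'M['F_2]_(w, p)) K :
  (v <= w)%N -> equidist A B v K ->
  forall d : 'I_K -> 'I_v -> bool,
    exists x, forall (j : 'I_K) (l : 'I_v), (y A B x j l != 0) = d j l.
Proof.
move=> vw eq d.
pose a j : 'I_(2 ^ v) := Ordinal (codeB_lt (d j)).
have := eq a; set S := [set _ | _] => E.
have : (0 < #|S|)%N.
  move: E; case: #|S| => //= E; have := expn_gt0 2 p; rewrite -E mul0n //.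
case/card_gt0P => x; rewrite inE => /forallP H.
exists x => j l; have := H j; rewrite cell // => /eqP /= /codeB_inj h; exact: h l.
Qed.

Lemma equi_of_surj (p w v : nat) (A : 'M['F_2]_p) (B : 'M['F_2]_(w, p)) K :
  (v <= w)%N ->
  (forall t : 'I_K * 'I_v -> 'F_2,
     exists x, forall (j : 'I_K) (l : 'I_v), y A B x j l = t (j, l)) ->
  equidist A B v K.
Proof.
move=> vw S a.
have [d Hd] : exists d : 'I_K -> {ffun 'I_v -> bool}, forall j, codeB (d j) = a j.
  apply: (@fin_all_exists _ (fun _ => {ffun 'I_v -> bool}) (fun j e => codeB e = a j)) => j.
  pose f (e : {ffun 'I_v -> bool}) : 'I_(2 ^ v) := Ordinal (codeB_lt e).
  have finj : injective f.
    move=> e e' /(congr1 val) /= /codeB_inj h; apply/ffunP => l; exact: h.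
  have : a j \in codom f.
    by apply: (inj_card_onto finj); rewrite card_ffun card_bool !card_ord.
  by case/codomP => e ->; exists e.
pose F (t : 'I_K * 'I_v -> 'F_2) :=
  [set x : 'cV['F_2]_p | [forall jl : 'I_K * 'I_v, y A B x jl.1 jl.2 == t jl]].
pose t0 (jl : 'I_K * 'I_v) : 'F_2 := (d jl.1 jl.2 : nat)%:R.
have -> : [set x0 : 'cV['F_2]_p | [forall i : 'I_K,
         (((a i)%:R / 2%:R ^+ v <= u A B x0 i)%R) &&
         ((u A B x0 i < (a i).+1%:R / 2%:R ^+ v)%R)]] = F t0.
  apply/setP => x; rewrite !inE; apply/forallP/forallP => H.
    case=> j l /=; have := H j; rewrite cell // -Hd => /eqP /codeB_inj /(_ l) h.
    by rewrite /t0 /= -h -F2E.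
  move=> j; rewrite cell // -Hd; apply/eqP; apply: codeB_ext => l.
  have := H (j, l); rewrite /t0 /= => /eqP ->.
  by case: (d j l); rewrite ?oner_eq0 ?eqxx.
have Fc : forall t, #|F t| = #|F (fun _ => 0)|.
  move=> t'; have [xt Ht] := S t'.
  have -> : F t' = [set x + xt | x in F (fun _ => 0)].
    apply/setP => x; apply/idP/imsetP => [Hx|[x' Hx' ->]].
      exists (x - xt); last by rewrite subrK.
      rewrite inE; apply/forallP => -[j l] /=.
      rewrite yadd // yopp //.
      move: Hx; rewrite inE => /forallP /(_ (j, l)) /= /eqP ->.
      by rewrite Ht subrr.
    rewrite inE; apply/forallP => -[j l] /=.
    move: Hx'; rewrite inE => /forallP /(_ (j, l)) /= /eqP h.
    by rewrite yadd // h Ht add0r.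
  by rewrite card_imset //; apply: addIr.
have sumF : (\sum_(t : {ffun 'I_K * 'I_v -> 'F_2}) #|F t| = #|{: 'cV['F_2]_p}|)%N.
  pose beta x : {ffun 'I_K * 'I_v -> 'F_2} := [ffun jl : 'I_K * 'I_v => y A B x jl.1 jl.2].
  have inF x (t : {ffun 'I_K * 'I_v -> 'F_2}) : (x \in F t) = (t == beta x).
    rewrite inE; apply/forallP/eqP => [H|->].
      by apply/ffunP => jl; rewrite ffunE; move/eqP: (H jl).
    by move=> jl; rewrite ffunE.
  transitivity (\sum_(t : {ffun 'I_K * 'I_v -> 'F_2}) \sum_(x : 'cV['F_2]_p) ((t == beta x) : nat)).
    apply: eq_bigr => t' _; rewrite -sum1_card big_mkcond /=.
    by apply: eq_bigr => x _; rewrite inF; case: (_ == _).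
  rewrite exchange_big /= -sum1_card; apply: eq_bigr => x _.
  rewrite (bigD1 (beta x)) //= eqxx big1 // => t' nt; by rewrite (negbTE nt).
move: sumF; rewrite (eq_bigr (fun _ => #|F (fun _ => 0)|)); last by move=> t' _; apply: Fc.
rewrite sum_nat_const card_ffun card_prod !card_ord card_mx card_Fp // muln1.
by rewrite Fc mulnC.
Qed.

Theorem mainTheorem2 (p w v kv : nat) (A : 'M['F_2]_p) (B : 'M['F_2]_(w, p))
  (x0 : 'cV['F_2]_p) :
  (1 <= v)%N -> (v <= w)%N ->
  is_kv A B v kv ->
  primitive_poly (char_poly A) ->
  x0 != 0 ->
  hpoly A B x0 0 != 0 ->
  (exists W : 'I_kv.+1 -> 'I_v -> 'F_2,
      (exists j l, W j l != 0) /\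
      forall i : nat,
        \sum_(l < v) \sum_(j < kv.+1) W j l * y A B x0 (i + j) l = 0)
  /\
  (forall k : nat, (k < kv)%N ->
     forall W : 'I_k.+1 -> 'I_v -> 'F_2,
       (forall i : nat,
          \sum_(l < v) \sum_(j < k.+1) W j l * y A B x0 (i + j) l = 0) ->
       forall j l, W j l = 0).
Proof.
move=> v1 vw [equi maxk] [irr _ _] nx _.
case: p A B x0 equi maxk irr nx => [|n] A B x0 equi maxk irr nx.
  by move: nx; rewrite flatmx0 eqxx.
have key : forall k (W : 'I_k.+1 -> 'I_v -> 'F_2),
    (forall i, \sum_(l < v) \sum_(j < k.+1) W j l * y A B x0 (i + j) l = 0) ->
    forall x, \sum_(l < v) \sum_(j < k.+1) W j l * y A B x j l = 0.
  move=> k W H x.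
  have r0 : rvec A B vw W = 0.
    apply: (cyc irr nx) => i; apply/matrixP => a b; rewrite !ord1 [RHS]mxE.
    by rewrite -relE.
  by have := relE A B vw W x 0; rewrite r0 mul0mx mxE.
split.
  pose R (jl : 'I_kv.+1 * 'I_v) := row (widen_ord vw jl.2) B *m A ^+ jl.1.
  case: (dichot R) => [[W' [[[j0 l0] nz] S0]] | surjR].
    exists (fun j l => W' (j, l)); split; first by exists j0, l0.
    move=> i; rewrite relE.
    suff -> : rvec A B vw (fun j l => W' (j, l)) = 0 by rewrite mul0mx mxE.
    rewrite /rvec exchange_big pair_big /=.
    transitivity (\sum_i W' i *: R i); last exact: S0.
    by apply: eq_bigr => -[j l].
  exfalso.
  have : equidist A B v kv.+1.
    apply: equi_of_surj => // t.
    have [x Hx] := surjR t; exists x => j l.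
    by rewrite yrow -(Hx (j, l)).
  by move/maxk; rewrite ltnn.
move=> k kk W rel j0 l0.
have hx := key k W rel.
have [x Hx] := surj_of_equi vw equi
  (fun (j : 'I_kv) (l : 'I_v) => (val j == val j0) && (l == l0)).
have E : forall (j : 'I_k.+1) (l : 'I_v),
    y A B x j l = if (j == j0) && (l == l0) then 1 else 0.
  move=> j l; have := Hx (widen_ord kk j) l; rewrite /= => h.
  by rewrite (F2E (y A B x j l)) h -[val j == val j0]/(j == j0); case: (_ && _).
have S : \sum_(l < v) \sum_(j < k.+1) W j l * (if (j == j0) && (l == l0) then 1 else 0) = W j0 l0.
  rewrite (bigD1 l0) //= [X in _ + X]big1 => [|l nl]; last first.
    by rewrite big1 // => j _; rewrite (negbTE nl) andbF mulr0.
  rewrite (bigD1 j0) //= big1 => [|j nj]; last by rewrite (negbTE nj) mulr0.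
  by rewrite !eqxx mulr1 !addr0.
rewrite -S -[RHS](hx x); apply: eq_bigr => l _; apply: eq_bigr => j _.
by rewrite E.
Qed.
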